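(* Let $X\in\mathbb{R}^{n\times d}$ and let $f:\mathbb{R}^n\to(-\infty,\infty]$, $g:\mathbb{R}^d\to(-\infty,\infty]$ be proper lower semicontinuous convex functions such that there exists $\beta\in\mathrm{relint}(\mathrm{dom}(g))$ with $X\beta\in\mathrm{relint}(\mathrm{dom}(f))$, and such that $P(\beta):=f(X\beta)+g(\beta)$ attains its infimum over $\mathbb{R}^d$. Let $D(\theta):=-f^\star(-\theta)-g^\star(X^\top\theta)$, assume $f^\star$ is $L$-strongly convex for some $L\ge0$, and let $\hat\theta$ be a maximizer of $D$ over $\mathbb{R}^n$. Let $u:\mathbb{R}^n\to[-\infty,\infty]$ satisfy $D(\theta)\le u(\theta)$ for all $\theta\in\mathbb{R}^n$. Then for every $\tilde\theta\in\mathbb{R}^n$, \[ \hat\theta\in\mathcal{R}(\tilde\theta,u):=\{\theta\mid l(\theta;\tilde\theta)\le u(\theta)\},\qquad l(\theta;\tilde\theta)=\frac{L}{2}\|\theta-\tilde\theta\|_2^2+D(\tilde\theta). \]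
   Context: $h^\star(v)=\sup_z v^\top z-h(z)$ denotes the Fenchel conjugate; $\mathrm{dom}(h)=\{z:|h(z)|<\infty\}$; $\mathrm{relint}$ denotes relative interior. *)

(* Defs.v *)
From HB Require Import structures.
From mathcomp Require Import all_boot all_order all_algebra.
From mathcomp Require Import all_classical all_reals all_analysis.
Set Implicit Arguments. Unset Strict Implicit. Unset Printing Implicit Defensive.
Import Order.TTheory GRing.Theory Num.Theory.
Import numFieldNormedType.Exports.
Local Open Scope classical_set_scope.
Local Open Scope ring_scope.

Section Defs.
Variable R : realType.

Definition dotv n (u v : 'cV[R]_n) : R := \sum_(i < n) u i 0 * v i 0.
Definition sqnorm2 n (v : 'cV[R]_n) : R := \sum_(i < n) v i 0 ^+ 2.
Definition norm2 n (v : 'cV[R]_n) : R := Num.sqrt (sqnorm2 v).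

Local Open Scope ereal_scope.

Definition proper_fun n (h : 'cV[R]_n -> \bar R) : Prop :=
  (forall x, -oo < h x) /\ (exists x, h x < +oo).

Definition econvex n (h : 'cV[R]_n -> \bar R) : Prop :=
  forall (x y : 'cV[R]_n) (t : R), (0 < t < 1)%R ->
    h (t *: x + (1 - t) *: y)%R <= t%:E * h x + (1 - t)%:E * h y.

Definition strongly_convex n (L : R) (h : 'cV[R]_n -> \bar R) : Prop :=
  econvex (fun x => h x - ((L / 2) * sqnorm2 x)%:E).

Definition fconj n (h : 'cV[R]_n -> \bar R) (v : 'cV[R]_n) : \bar R :=
  ereal_sup [set ((dotv v z)%:E - h z)%E | z in [set: 'cV[R]_n]].

Definition edom n (h : 'cV[R]_n -> \bar R) : set 'cV[R]_n :=
  [set z | h z \is a fin_num].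

Local Close Scope ereal_scope.

Definition aff_hull n (C : set 'cV[R]_n) : set 'cV[R]_n :=
  [set x | exists (k : nat) (p : 'I_k -> 'cV[R]_n) (w : 'I_k -> R),
     (forall i, C (p i)) /\ \sum_(i < k) w i = 1 /\
     x = \sum_(i < k) w i *: p i].

Definition relint n (C : set 'cV[R]_n) : set 'cV[R]_n :=
  [set x | C x /\ exists e : R, 0 < e /\
     forall y, aff_hull C y -> norm2 (y - x) < e -> C y].

End Defs.

(* Main.v *)
Require Import Defs.
From HB Require Import structures.
From mathcomp Require Import all_boot all_order all_algebra.
From mathcomp Require Import all_classical all_reals all_analysis.
From mathcomp Require Import ring lra.
Import Order.TTheory GRing.Theory Num.Theory.
Import numFieldNormedType.Exports.
Local Open Scope classical_set_scope.
Local Open Scope ring_scope.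

Lemma dotvD (R : realType) n (a b : R) (v1 v2 z : 'cV[R]_n) :
  dotv (a *: v1 + b *: v2) z = a * dotv v1 z + b * dotv v2 z.
Proof.
rewrite /dotv !mulr_sumr -big_split; apply: eq_bigr => i _; rewrite !mxE /=; ring.
Qed.

Lemma sqnorm2_cvx (R : realType) n (t : R) (a b : 'cV[R]_n) :
  sqnorm2 (t *: a + (1 - t) *: b) =
  t * sqnorm2 a + (1 - t) * sqnorm2 b - t * (1 - t) * sqnorm2 (a - b).
Proof.
rewrite /sqnorm2 !mulr_sumr -big_split -sumrB; apply: eq_bigr => i _.
rewrite !mxE /=; ring.
Qed.

Lemma sqnorm2_ge0 (R : realType) n (a : 'cV[R]_n) : 0 <= sqnorm2 a.
Proof. by apply: sumr_ge0 => i _; apply: sqr_ge0. Qed.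

Lemma fconj_ub (R : realType) n (h : 'cV[R]_n -> \bar R) v z r :
  h z = r%:E -> ((dotv v z - r)%:E <= fconj h v)%E.
Proof.
move=> hz; apply: ereal_sup_ubound; exists z => //; by rewrite hz.
Qed.

Lemma fconj_gt (R : realType) n (h : 'cV[R]_n -> \bar R) v :
  proper_fun h -> (-oo < fconj h v)%E.
Proof.
move=> [hgt [z hz]].
have := hgt z; have := hz.
case E: (h z) => [r| |] // _ _.
exact: (lt_le_trans (ltNyr _) (@fconj_ub _ _ _ v _ _ E)).
Qed.

Lemma fconj_cvx (R : realType) n (h : 'cV[R]_n -> \bar R) v1 v2 s1 s2 t :
  (forall x, -oo < h x)%E ->
  fconj h v1 = s1%:E -> fconj h v2 = s2%:E -> 0 < t < 1 ->
  (fconj h (t *: v1 + (1 - t) *: v2) <= (t * s1 + (1 - t) * s2)%:E)%E.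
Proof.
move=> hp e1 e2 /andP[t0 t1].
apply/ereal_supP => _ [z _ <-].
have := hp z.
case E: (h z) => [r| |] // _.
- have h1 := @fconj_ub _ _ _ v1 _ _ E; have h2 := @fconj_ub _ _ _ v2 _ _ E.
  rewrite e1 lee_fin in h1; rewrite e2 lee_fin in h2.
  rewrite -EFinB lee_fin dotvD.
  have t1' : 0 < 1 - t by lra.
  have := ler_wpM2l (ltW t0) h1; have := ler_wpM2l (ltW t1') h2. nra.
- by rewrite /= leNye.
Qed.

Theorem theorem4 (R : realType) (n d : nat) (X : 'M[R]_(n, d))
  (f : 'cV[R]_n -> \bar R) (g : 'cV[R]_d -> \bar R)
  (f_proper : proper_fun f) (f_lsc : lower_semicontinuous f) (f_cvx : econvex f)
  (g_proper : proper_fun g) (g_lsc : lower_semicontinuous g) (g_cvx : econvex g)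
  (qualif : exists beta : 'cV[R]_d,
      relint (edom g) beta /\ relint (edom f) (X *m beta))
  (P_attains : exists beta0 : 'cV[R]_d, forall beta : 'cV[R]_d,
      (f (X *m beta0) + g beta0 <= f (X *m beta) + g beta)%E)
  (L : R) (L_ge0 : 0 <= L) (fconj_strong : strongly_convex L (fconj f))
  (theta_hat : 'cV[R]_n)
  (theta_hat_max : forall theta : 'cV[R]_n,
      (- fconj f (- theta) - fconj g (X^T *m theta)
       <= - fconj f (- theta_hat) - fconj g (X^T *m theta_hat))%E)
  (u : 'cV[R]_n -> \bar R)
  (u_ub : forall theta : 'cV[R]_n,
      (- fconj f (- theta) - fconj g (X^T *m theta) <= u theta)%E) :
  forall theta_tilde : 'cV[R]_n,
    (((L / 2) * sqnorm2 (theta_hat - theta_tilde))%:E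
      + (- fconj f (- theta_tilde) - fconj g (X^T *m theta_tilde))
     <= u theta_hat)%E.
Proof.
move=> tt.
apply: le_trans (u_ub theta_hat).
have Fgt := fun v => @fconj_gt _ _ _ v f_proper.
have Ggt := fun v => @fconj_gt _ _ _ v g_proper.
have hmax := theta_hat_max tt.
have := Fgt (- tt); case eFt: (fconj f (- tt)) => [Ft| |] // _; last first.
  by rewrite /= addeNy leNye.
have := Ggt (X^T *m tt); case eGt: (fconj g (X^T *m tt)) => [Gt| |] // _; last first.
  by rewrite /= addeNy leNye.
rewrite eFt eGt in hmax.
move: hmax.
have := Fgt (- theta_hat); case eFh: (fconj f (- theta_hat)) => [Fh| |] // _.
have := Ggt (X^T *m theta_hat); case eGh: (fconj g (X^T *m theta_hat)) => [Gh| |] // _.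
move=> hmax.
rewrite -!EFinN -!EFinD lee_fin.
rewrite -!EFinN -!EFinD lee_fin in hmax.
set N := sqnorm2 (theta_hat - tt).
set K := L / 2 * N.
have K0 : 0 <= K by rewrite /K; apply: mulr_ge0; [lra | exact: sqnorm2_ge0].
have key : forall t, 0 < t < 1 -> (- Ft - Gt) - (- Fh - Gh) + K * (1 - t) <= 0.
  move=> t t01.
  have /andP[t0 t1] := t01.
  set th := t *: tt + (1 - t) *: theta_hat.
  have hf := fconj_strong (- tt) (- theta_hat) t t01.
  rewrite eFt eFh -!EFinB -!EFinM -EFinD lee_subel_addr // -EFinD in hf.
  rewrite sqnorm2_cvx in hf.
  rewrite (_ : sqnorm2 (- tt - - theta_hat) = N) in hf; last by rewrite opprK addrC.
  have eth : - th = t *: (- tt) + (1 - t) *: (- theta_hat).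
    by rewrite /th opprD -!scalerN.
  rewrite -eth in hf.
  have hg := @fconj_cvx _ _ g _ _ _ _ t g_proper.1 eGt eGh t01.
  rewrite !scalemxAr -mulmxDr -/th in hg.
  have hm := theta_hat_max th.
  move: hf hg hm.
  have := Fgt (- th); case: (fconj f (- th)) => [a| |] // _.
  have := Ggt (X^T *m th); case: (fconj g (X^T *m th)) => [b| |] // _.
  rewrite !lee_fin => ha hb; rewrite eFh eGh -!EFinN -!EFinD lee_fin => hm.
  have : t * ((- Ft - Gt) - (- Fh - Gh) + K * (1 - t)) <= 0.
    rewrite /K; nra.
  by rewrite pmulr_rle0.
rewrite leNgt; apply/negP => hlt.
set del := K + (- Ft - Gt) - (- Fh - Gh).
have del0 : 0 < del by rewrite /del; lra.
set t := del / (2 * (K + del)).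
have Kd : 0 < K + del by lra.
have ht : t * (2 * (K + del)) = del.
  rewrite /t mulrAC -mulrA divff ?mulr1 //; lra.
have t0 : 0 < t by rewrite /t divr_gt0 //; lra.
have t1 : t < 1 by nra.
have := key t (introT andP (conj t0 t1)).
rewrite /del in ht; nra.
Qed.
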